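(* Let $\Omega$ be a semigroup and $\mathcal{O}=(\{\mathcal{O}(n)\}_{n\ge1},\circ_i,\mathds{1})$ a nonsymmetric operad. For $n\ge1$ let $\mathcal{O}^\Omega(n)$ be the $\mathbf{k}$-module of collections $f=\{f_{\alpha_1,\dots,\alpha_n}\in\mathcal{O}(n)\}_{\alpha_1,\dots,\alpha_n\in\Omega}$ labelled by $\Omega^{\times n}$, and for $f\in\mathcal{O}^\Omega(m)$, $g\in\mathcal{O}^\Omega(n)$, $1\le i\le m$ define $(f\circ_i^\Omega g)_{\alpha_1,\dots,\alpha_{m+n-1}}=f_{\alpha_1,\dots,\alpha_{i-1},\,\alpha_i\alpha_{i+1}\cdots\alpha_{i+n-1},\,\alpha_{i+n},\dots,\alpha_{m+n-1}}\circ_i g_{\alpha_i,\dots,\alpha_{i+n-1}}$. Let $\mathds{1}\in\mathcal{O}^\Omega(1)$ be the collection with $\mathds{1}_\alpha=\mathds{1}$ for all $\alpha\in\Omega$. Then $\mathcal{O}^\Omega=(\{\mathcal{O}^\Omega(n)\}_{n\ge1},\circ_i^\Omega,\mathds{1})$ is a nonsymmetric operad.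
   Context: $\mathbf{k}$ is a commutative unital ring of characteristic $0$; $\Omega$ is a semigroup (not necessarily commutative or unital) with product written by juxtaposition. A nonsymmetric operad consists of $\mathbf{k}$-modules $\mathcal{O}(n)$, $n\ge1$, bilinear partial compositions $\circ_i:\mathcal{O}(m)\otimes\mathcal{O}(n)\to\mathcal{O}(m+n-1)$ ($1\le i\le m$) and $\mathds{1}\in\mathcal{O}(1)$ with $(f\circ_i g)\circ_{i+j-1}h=f\circ_i(g\circ_j h)$ ($1\le j\le n$), $(f\circ_i g)\circ_{j+n-1}h=(f\circ_j h)\circ_i g$ ($i<j$), and $f\circ_i\mathds{1}=\mathds{1}\circ_1 f=f$. *)

(* Defs.v *)
From HB Require Import structures.
From mathcomp Require Import all_boot all_order all_algebra.
From mathcomp Require Import functions.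
Set Implicit Arguments. Unset Strict Implicit. Unset Printing Implicit Defensive.
Import GRing.Theory.

Definition castO (T : nat -> Type) (m n : nat) (e : m = n) (x : T m) : T n :=
  eq_rect m T x n e.

(* Nonsymmetric operad structure on k-modules O(n) (n >= 1), with partial
   compositions comp m n i = \circ_i : O(m) x O(n) -> O(m+n-1) (1 <= i <= m)
   and unit u in O(1).  comp is a total function; its values outside the
   range 1 <= i <= m, n >= 1 are irrelevant (never constrained).
   Equations between different (but provably equal) arities are stated
   through castO along any proof of the arity equality. *)
Definition is_ns_operad (R : comNzRingType) (O : nat -> lmodType R)
  (comp : forall m n : nat, nat -> O m -> O n -> O (m + n - 1)%N)
  (u : O 1%N) : Prop :=
  (forall (m n i : nat), (1 <= i <= m)%N -> (0 < n)%N ->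
     (forall g : O n, linear (fun f : O m => comp m n i f g)) /\
     (forall f : O m, linear (comp m n i f)))
  /\
  (forall (m n p i j : nat) (f : O m) (g : O n) (h : O p),
     (1 <= i <= m)%N -> (1 <= j <= n)%N -> (0 < p)%N ->
     forall e : (m + n - 1 + p - 1 = m + (n + p - 1) - 1)%N,
       @castO (fun k => O k) _ _ e (comp (m + n - 1)%N p (i + j - 1)%N (comp m n i f g) h)
       = comp m (n + p - 1)%N i f (comp n p j g h))
  /\
  (forall (m n p i j : nat) (f : O m) (g : O n) (h : O p),
     (1 <= i)%N -> (i < j)%N -> (j <= m)%N -> (0 < n)%N -> (0 < p)%N ->
     forall e : (m + n - 1 + p - 1 = m + p - 1 + n - 1)%N,
       @castO (fun k => O k) _ _ e (comp (m + n - 1)%N p (j + n - 1)%N (comp m n i f g) h)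
       = comp (m + p - 1)%N n i (comp m p j f h) g)
  /\
  (forall (m i : nat) (f : O m), (1 <= i <= m)%N ->
     forall e : (m + 1 - 1 = m)%N, @castO (fun k => O k) _ _ e (comp m 1%N i f u) = f)
  /\
  (forall (n : nat) (f : O n), (0 < n)%N ->
     forall e : (1 + n - 1 = n)%N, @castO (fun k => O k) _ _ e (comp 1%N n 1%N u f) = f).

Section Omega.
Variables (R : comNzRingType) (S : Type) (mul : S -> S -> S).

Definition OmegaO (O : nat -> lmodType R) (n : nat) : lmodType R :=
  (n.-tuple S -> O n : lmodType R).

(* Given a label sequence (a_1, ..., a_{m+n-1}), the label
   (a_1, ..., a_{i-1}, a_i a_{i+1} ... a_{i+n-1}, a_{i+n}, ..., a_{m+n-1}). *)
Definition relabel (i n : nat) (s : seq S) : seq S :=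
  take i.-1 s
  ++ (match drop i.-1 s with
      | x :: r => [:: foldl mul x (take n.-1 r)]
      | [::] => [::]
      end)
  ++ drop (i.-1 + n) s.

Definition block (i n : nat) (s : seq S) : seq S := take n (drop i.-1 s).

Definition compOmega (O : nat -> lmodType R)
  (comp : forall m n : nat, nat -> O m -> O n -> O (m + n - 1)%N)
  (m n i : nat) (f : OmegaO O m) (g : OmegaO O n) : OmegaO O (m + n - 1)%N :=
  fun a : (m + n - 1).-tuple S =>
    match (insub (relabel i n a) : option (m.-tuple S)),
          (insub (block i n a) : option (n.-tuple S)) with
    | Some b, Some c => comp m n i (f b) (g c)
    | _, _ => 0%R
    end.

Definition unitOmega (O : nat -> lmodType R) (u : O 1%N) : OmegaO O 1%N :=
  fun _ => u.

End Omega.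

(* Main.v *)
Require Import Defs.
From HB Require Import structures.
From mathcomp Require Import all_boot all_order all_algebra.
From mathcomp Require Import functions.
From mathcomp Require Import boolp zify.
Import GRing.Theory.
Set Implicit Arguments. Unset Strict Implicit.

Section Aux.
Variables (S : Type) (mul : S -> S -> S) (mulA : associative mul).

Definition pr (s : seq S) : seq S :=
  match s with x :: r => [:: foldl mul x r] | [::] => [::] end.

Lemma size_pr s : 0 < size s -> size (pr s) = 1.
Proof. by case: s. Qed.

Lemma relabel_cat i n (A C E : seq S) : size A = i.-1 -> size C = n -> 0 < n ->
  relabel mul i n (A ++ C ++ E) = A ++ pr C ++ E.
Proof.
move=> hA hC hn; rewrite /relabel take_size_cat // drop_size_cat //.
case: C hC => [|x r] hC /=; first by subst n.
rewrite take_size_cat; last by rewrite -hC.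
have -> : A ++ x :: r ++ E = (A ++ x :: r) ++ E by rewrite -catA.
by rewrite drop_size_cat // size_cat hA hC.

Qed.

Lemma block_cat i n (A C E : seq S) : size A = i.-1 -> size C = n ->
  block i n (A ++ C ++ E) = C.
Proof. by move=> hA hC; rewrite /block drop_size_cat // take_size_cat. Qed.

Lemma foldl_mulA x y t : foldl mul (mul x y) t = mul x (foldl mul y t).
Proof. by elim: t x y => //= z t IH x y; rewrite -mulA IH. Qed.

Lemma pr_mid B C D : 0 < size C -> pr (B ++ pr C ++ D) = pr (B ++ C ++ D).
Proof.
case: C => // c C _ /=.
case: B => [|b B] /=.
  by rewrite foldl_cat.
by rewrite !foldl_cat /= ?foldl_cat (foldl_mulA _ c C).
Qed.
End Aux.

Lemma split3 (S : Type) (s : seq S) x y z : size s = x + y + z ->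
  exists A C E, s = A ++ C ++ E /\ size A = x /\ size C = y /\ size E = z.
Proof.
move=> hs; exists (take x s), (take y (drop x s)), (drop y (drop x s)).
rewrite !cat_take_drop !size_take !size_drop hs; split => //.
split; first by case: ifP => //; lia.
split; first by case: ifP => //; lia.
lia.
Qed.

Unset Implicit Arguments.
Section Main.
Variables (R : comNzRingType) (S : Type) (mul : S -> S -> S) (mulA : associative mul)
  (O : nat -> lmodType R)
  (comp : forall m n : nat, nat -> O m -> O n -> O (m + n - 1)%N).

Lemma compOmegaE m n i (f : OmegaO S O m) (g : OmegaO S O n)
  (a : (m + n - 1).-tuple S) (A C E : seq S) :
  val a = A ++ C ++ E -> size A = i.-1 -> size C = n -> 0 < n ->
  size A + 1 + size E = m ->
  exists (b : m.-tuple S) (c : n.-tuple S),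
    [/\ val b = A ++ pr mul C ++ E, val c = C &
      @compOmega R S mul O comp m n i f g a = comp m n i (f b) (g c)].
Proof.
move=> ha hA hC hn hm.
have sb : size (A ++ pr mul C ++ E) == m.
  by rewrite !size_cat size_pr ?hC // -hm addnA.
have sc : size C == n by rewrite hC.
exists (Tuple sb), (Tuple sc); split => //.
rewrite /compOmega ha relabel_cat // block_cat //.
have hb : insub (A ++ pr mul C ++ E) = Some (Tuple sb) := valK (Tuple sb).
have hc : insub C = Some (Tuple sc) := valK (Tuple sc).
by rewrite hb hc.
Qed.

Lemma castOmegaE k1 k2 (e : k1 = k2) (F : OmegaO S O k1) (a : k2.-tuple S) :
  @castO (fun k => OmegaO S O k) _ _ e F a
  = @castO (fun k => O k) _ _ e (F (tcast (esym e) a)).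
Proof. by case: k2 / e a. Qed.

End Main.

Lemma split5 (S : Type) (s : seq S) x1 x2 x3 x4 x5 :
  size s = x1 + x2 + x3 + x4 + x5 ->
  exists A B C D E, s = A ++ (B ++ C ++ D) ++ E /\ size A = x1 /\ size B = x2
    /\ size C = x3 /\ size D = x4 /\ size E = x5.
Proof.
move=> hs; have hs' : size s = x1 + (x2 + x3 + x4) + x5 by lia.
have [A [M [E [-> [hA [hM hE]]]]]] := split3 hs'.
have [B [C [D [-> [hB [hC hD]]]]]] := split3 hM.
by exists A, B, C, D, E.
Qed.

Lemma OmegaO_lin (R : comNzRingType) (S : Type) (O : nat -> lmodType R) k
  (F G : OmegaO S O k) (a : R) t : (a *: F + G)%R t = (a *: F t + G t)%R.
Proof. by []. Qed.

Theorem theorem5p5 (R : comNzRingType) (charR0 : [pchar R]%R =i pred0)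
  (S : Type) (mul : S -> S -> S) (mulA : associative mul)
  (O : nat -> lmodType R)
  (comp : forall m n : nat, nat -> O m -> O n -> O (m + n - 1)%N)
  (u : O 1%N) :
  is_ns_operad comp u ->
  is_ns_operad (@compOmega R S mul O comp) (@unitOmega R S O u).
Proof.
move=> [hlin [hsa [hpa [hru hlu]]]].
split.
  move=> m n i hi hn; have [hl1 hl2] := hlin m n i hi hn.
  split => [g|f] a x y; apply: funext => t; rewrite /compOmega !OmegaO_lin /=.
    case: insub => [b|]; last by rewrite scaler0 addr0.
    case: insub => [c|]; last by rewrite scaler0 addr0.
    by rewrite OmegaO_lin hl1.
  case: insub => [b|]; last by rewrite scaler0 addr0.
  case: insub => [c|]; last by rewrite scaler0 addr0.
  by rewrite OmegaO_lin hl2.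
split.
  move=> m n p i j f g h /andP[hi1 him] /andP[hj1 hjn] hp e.
  apply: funext => a; rewrite castOmegaE.
  set a' := tcast (esym e) a.
  have [A [B [C [D [E [ha [hA [hB [hC [hD hE]]]]]]]]]] :=
    @split5 _ (val a') i.-1 j.-1 p (n - j) (m - i) ltac:(rewrite size_tuple; lia).
  have [b [c [hb hc ->]]] := @compOmegaE _ _ mul _ comp _ _ (i + j - 1)
     (compOmega mul comp i f g) h a' (A ++ B) C (D ++ E)
     ltac:(by rewrite ha -?catA) ltac:(rewrite size_cat; lia) hC hp
     ltac:(rewrite !size_cat; lia).
  have [b1 [c1 [hb1 hc1 ->]]] := @compOmegaE _ _ mul _ comp _ _ i f g b
     A (B ++ pr mul C ++ D) E
     ltac:(by rewrite hb -?catA) hA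
     ltac:(rewrite !size_cat size_pr; lia) ltac:(lia) ltac:(lia).
  have [b2 [c2 [hb2 hc2 ->]]] := @compOmegaE _ _ mul _ comp _ _ i f
     (compOmega mul comp j g h) a A (B ++ C ++ D) E
     ltac:(by rewrite -ha /a'; case: _ / (esym e)) hA
     ltac:(rewrite !size_cat; lia) ltac:(lia) ltac:(lia).
  have [b3 [c3 [hb3 hc3 ->]]] := @compOmegaE _ _ mul _ comp _ _ j g h c2 B C D
     ltac:(by rewrite hc2) hB hC hp ltac:(lia).
  have -> : b1 = b2 by apply: val_inj; rewrite hb1 hb2 pr_mid // hC.
  have -> : c1 = b3 by apply: val_inj; rewrite hc1 hb3.
  have -> : c = c3 by apply: val_inj; rewrite hc hc3.
  by rewrite hsa // ?hi1 ?him ?hj1.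
split.
  move=> m n p i j f g h hi1 hij hjm hn hp e.
  apply: funext => a; rewrite castOmegaE.
  set a' := tcast (esym e) a.
  have [A [B [C [D [E [ha [hA [hB [hC [hD hE]]]]]]]]]] :=
    @split5 _ (val a') i.-1 n (j - i - 1) p (m - j) ltac:(rewrite size_tuple; lia).
  have [b [c [hb hc ->]]] := @compOmegaE _ _ mul _ comp _ _ (j + n - 1)
     (compOmega mul comp i f g) h a' (A ++ B ++ C) D E
     ltac:(by rewrite ha -?catA) ltac:(rewrite !size_cat; lia) hD hp
     ltac:(rewrite !size_cat; lia).
  have [b1 [c1 [hb1 hc1 ->]]] := @compOmegaE _ _ mul _ comp _ _ i f g b
     A B (C ++ pr mul D ++ E)
     ltac:(by rewrite hb -?catA) hA hB hn
     ltac:(rewrite !size_cat size_pr; lia).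
  have [b2 [c2 [hb2 hc2 ->]]] := @compOmegaE _ _ mul _ comp _ _ i
     (compOmega mul comp j f h) g a A B (C ++ D ++ E)
     ltac:(by move: ha; rewrite -?catA => <-; rewrite /a'; case: _ / (esym e)) hA hB hn
     ltac:(rewrite !size_cat; lia).
  have [b3 [c3 [hb3 hc3 ->]]] := @compOmegaE _ _ mul _ comp _ _ j f h b2
     (A ++ pr mul B ++ C) D E
     ltac:(by rewrite hb2 -?catA) ltac:(rewrite !size_cat size_pr; lia) hD hp
     ltac:(rewrite !size_cat size_pr; lia).
  have -> : b1 = b3 by apply: val_inj; rewrite hb1 hb3 -?catA.
  have -> : c1 = c2 by apply: val_inj; rewrite hc1 hc2.
  have -> : c = c3 by apply: val_inj; rewrite hc hc3.
  by rewrite hpa.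
split.
  move=> m i f /andP[hi1 him] e.
  apply: funext => a; rewrite castOmegaE.
  set a' := tcast (esym e) a.
  have [A [C [E [ha [hA [hC hE]]]]]] :=
    @split3 _ (val a') i.-1 1 (m - i) ltac:(rewrite size_tuple; lia).
  have [b [c [hb hc ->]]] := @compOmegaE _ _ mul _ comp _ _ i f
     (@unitOmega R S O u) a' A C E ha hA hC erefl ltac:(lia).
  have -> : b = a.
    apply: val_inj; rewrite hb.
    have -> : pr mul C = C by case: C hC {ha hb hc} => [|x [|]].
    by rewrite -ha /a'; case: _ / (esym e).
  exact: (hru m i (f a) ltac:(by rewrite hi1 him) e).
move=> n g hn e.
apply: funext => a; rewrite castOmegaE.
set a' := tcast (esym e) a.
have [b [c [hb hc ->]]] := @compOmegaE _ _ mul _ comp _ _ 1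
   (@unitOmega R S O u) g a' [::] (val a') [::] ltac:(by rewrite cats0) erefl
   ltac:(rewrite size_tuple; lia) hn erefl.
have -> : c = a by apply: val_inj; rewrite hc /a'; case: _ / (esym e).
exact: (hlu n (g a) hn e).
Qed.
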